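(* Let $(M,d)$ be a bounded metric space with metric normal structure such that $\mathcal A(M)$ is compact, and let $T:M\to M$ be orbit-nonexpansive. Then $T$ has a fixed point, and the fixed point set $\mathrm{Fix}(T)$ is a one-local retract of $M$.
   Context: For a metric space $(M,d)$, a mapping $T:M\to M$ and $x\in M$, the orbit of $x$ is $o_T(x)=\{x\}\cup\{T^nx:n\in\mathbb N\}$. For $x\in M$ and bounded $A\subseteq M$, $D(x,A)=\sup\{d(x,a):a\in A\}$ and $\delta(A)=\sup\{d(x,y):x,y\in A\}$. A mapping $T:M\to M$ is orbit-nonexpansive if $d(Tx,Ty)\le D(x,o_T(y))$ for all $x,y\in M$. A subset of $M$ is admissible if it is an intersection of closed balls of $M$; $\mathcal A(M)$ denotes the family of admissible sets. $\mathcal A(M)$ is compact if every subfamily of $\mathcal A(M)$ all of whose finite intersections are nonempty has nonempty intersection. $(M,d)$ has metric normal structure if for every admissible set $A$ with more than one point there exists $z_A\in A$ with $D(z_A,A)<\delta(A)$. A subset $E\subseteq M$ is a one-local retract of $M$ if for every family of closed balls with centers in $E$ having nonempty intersection, that intersection meets $E$. *)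

(* Defs.v *)
From Stdlib Require Import Reals List.
From Coquelicot Require Import Coquelicot.
Open Scope R_scope.

Definition is_metric {M : Type} (d : M -> M -> R) : Prop :=
  (forall x y, 0 <= d x y) /\
  (forall x y, d x y = 0 <-> x = y) /\
  (forall x y, d x y = d y x) /\
  (forall x y z, d x z <= d x y + d y z).

Definition bounded_metric {M : Type} (d : M -> M -> R) : Prop :=
  exists B : R, forall x y, d x y <= B.

(* supremum of a set of reals (meaningful for nonempty bounded sets) *)
Definition sup_R (E : R -> Prop) : R := real (Lub_Rbar E).

Definition Dist {M : Type} (d : M -> M -> R) (x : M) (A : M -> Prop) : R :=
  sup_R (fun t => exists a, A a /\ t = d x a).

Definition diam {M : Type} (d : M -> M -> R) (A : M -> Prop) : R :=
  sup_R (fun t => exists x y, A x /\ A y /\ t = d x y).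

Definition orbit {M : Type} (T : M -> M) (x : M) : M -> Prop :=
  fun z => z = x \/ exists n : nat, z = Nat.iter n T x.

Definition orbit_nonexpansive {M : Type} (d : M -> M -> R) (T : M -> M) : Prop :=
  forall x y, d (T x) (T y) <= Dist d x (orbit T y).

Definition cball {M : Type} (d : M -> M -> R) (c : M) (r : R) : M -> Prop :=
  fun x => d x c <= r.

(* intersection of a family of closed balls, the family being given as a
   set F of (center, radius) pairs *)
Definition ball_inter {M : Type} (d : M -> M -> R) (F : M -> R -> Prop) : M -> Prop :=
  fun x => forall c r, F c r -> cball d c r x.

Definition admissible {M : Type} (d : M -> M -> R) (A : M -> Prop) : Prop :=
  exists F : M -> R -> Prop, forall x, A x <-> ball_inter d F x.

Definition admissible_compact {M : Type} (d : M -> M -> R) : Prop :=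
  forall Fam : (M -> Prop) -> Prop,
    (forall A, Fam A -> admissible d A) ->
    (forall l : list (M -> Prop),
        (forall A, In A l -> Fam A) -> exists x, forall A, In A l -> A x) ->
    exists x, forall A, Fam A -> A x.

Definition metric_normal_structure {M : Type} (d : M -> M -> R) : Prop :=
  forall A : M -> Prop, admissible d A ->
    (exists x y, A x /\ A y /\ x <> y) ->
    exists z, A z /\ Dist d z A < diam d A.

Definition Fix {M : Type} (T : M -> M) : M -> Prop := fun x => T x = x.

Definition one_local_retract {M : Type} (d : M -> M -> R) (E : M -> Prop) : Prop :=
  forall F : M -> R -> Prop,
    (forall c r, F c r -> E c) ->
    (exists x, ball_inter d F x) ->
    exists x, E x /\ ball_inter d F x.

(* Main.v *)
Require Import Defs.
From Stdlib Require Import Reals List Classical Lra.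
From Coquelicot Require Import Coquelicot.
From mathcomp Require classical_sets.
Open Scope R_scope.
Set Bullet Behavior "Strict Subproofs".

Lemma minimal_exists (M : Type) (A : M -> Prop) (Q : (M -> Prop) -> Prop) :
  (forall K K', (forall x, K x <-> K' x) -> Q K -> Q K') ->
  (forall Fam : (M -> Prop) -> Prop,
     (forall K, Fam K -> Q K) ->
     (forall K1 K2, Fam K1 -> Fam K2 -> (forall x, K1 x -> K2 x) \/ (forall x, K2 x -> K1 x)) ->
     Q (fun x => A x /\ forall K, Fam K -> K x)) ->
  exists K, Q K /\ forall K', Q K' -> (forall x, K' x -> K x) -> forall x, K x -> K' x.
Proof.
  intros Qext Hch.
  destruct (@classical_sets.Zorn_bigcup M (fun X => Q (fun x => A x /\ ~ X x))) as [X [PX HX]].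
  - intros F FP Ftot.
    set (Fam := fun K => exists X, F X /\ forall x, K x <-> A x /\ ~ X x).
    assert (H := Hch Fam).
    eapply Qext; [|apply H].
    + intros x; simpl. split.
      * intros [Ax HK]. split; [exact Ax|]. intros [Y FY Yx].
        assert (HY := HK (fun x => A x /\ ~ Y x)). destruct HY as [_ HY].
        { exists Y; split; [exact FY| tauto]. }
        exact (HY Yx).
      * intros [Ax Hn]. split; [exact Ax|]. intros K [Y [FY HKY]].
        apply HKY. split; [exact Ax|]. intro Yx. apply Hn. exists Y; assumption.
    + intros K [Y [FY HKY]]. eapply Qext; [|apply (FP Y FY)]. intros x; simpl. symmetry; apply HKY.
    + intros K1 K2 [Y1 [F1 H1]] [Y2 [F2 H2]].
      destruct (Ftot Y1 Y2 F1 F2) as [S|S].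
      * right. intros x Hx. apply H1. apply H2 in Hx. destruct Hx as [a b]. split; auto.
      * left. intros x Hx. apply H2. apply H1 in Hx. destruct Hx as [a b]. split; auto.
  - exists (fun x => A x /\ ~ X x). split; [exact PX|].
    intros K' QK' Hsub x [Ax nXx].
    destruct (classic (K' x)) as [h|h]; [exact h|exfalso].
    apply (HX (fun y => X y \/ ~ K' y)).
    + unfold classical_sets.proper, classical_sets.subset; split.
      * intros y Hy; left; exact Hy.
      * intros Hs. apply nXx. exact (Hs x (or_intror h)).
    + eapply Qext; [|exact QK']. intros y; simpl. split.
      * intros Ky. destruct (Hsub y Ky) as [a b]. split; [exact a|]. intros [c|c]; auto.
      * intros [a b]. apply NNPP. intro c. apply b. right; exact c.
Qed.

Lemma sup_ub (E : R -> Prop) (t B : R) :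
  E t -> (forall u, E u -> u <= B) -> t <= sup_R E.
Proof.
  intros Et HB. unfold sup_R.
  destruct (Lub_Rbar_correct E) as [Hub Hl].
  destruct (Lub_Rbar E) as [r| |] eqn:Heq; simpl.
  - exact (Hub t Et).
  - exfalso. assert (H := Hl (Finite B) HB). simpl in H. exact H.
  - exfalso. exact (Hub t Et).
Qed.

Lemma sup_le (E : R -> Prop) (b : R) :
  (exists t, E t) -> (forall u, E u -> u <= b) -> sup_R E <= b.
Proof.
  intros [t Et] Hb. unfold sup_R.
  destruct (Lub_Rbar_correct E) as [Hub Hl].
  destruct (Lub_Rbar E) as [r| |] eqn:Heq; simpl.
  - exact (Hl (Finite b) Hb).
  - exfalso. exact (Hl (Finite b) Hb).
  - exfalso. exact (Hub t Et).
Qed.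

Section Aux.
Context {M : Type} (d : M -> M -> R).

Lemma Dist_ub B x (A : M -> Prop) a :
  (forall x y, d x y <= B) -> A a -> d x a <= Dist d x A.
Proof.
  intros HB Aa. unfold Dist. apply (sup_ub _ _ B).
  - exists a; auto.
  - intros u [a' [_ ->]]. apply HB.
Qed.

Lemma Dist_le x (A : M -> Prop) b :
  (exists a, A a) -> (forall a, A a -> d x a <= b) -> Dist d x A <= b.
Proof.
  intros [a Aa] H. unfold Dist. apply sup_le.
  - exists (d x a); exists a; auto.
  - intros u [a' [Aa' ->]]. auto.
Qed.

Lemma diam_le (A : M -> Prop) b :
  (exists a, A a) -> (forall x y, A x -> A y -> d x y <= b) -> diam d A <= b.
Proof.
  intros [a Aa] H. unfold diam. apply sup_le.
  - exists (d a a); exists a, a; auto.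
  - intros u [x [y [Ax [Ay ->]]]]. auto.
Qed.

Lemma adm_and (K : M -> Prop) (G : M -> R -> Prop) :
  admissible d K ->
  admissible d (fun x => K x /\ forall c r, G c r -> d x c <= r).
Proof.
  intros [F HF]. exists (fun c r => F c r \/ G c r). intros x. split.
  - intros [Kx Hx] c r [Fc|Gc].
    + apply HF; auto.
    + apply Hx; auto.
  - intros Hx. split.
    + apply HF. intros c r Fc. apply Hx. auto.
    + intros c r Gc. apply Hx. auto.
Qed.

Lemma adm_inter (Fam : (M -> Prop) -> Prop) :
  (forall K, Fam K -> admissible d K) ->
  admissible d (fun x => forall K, Fam K -> K x).
Proof.
  intros Hadm.
  exists (fun c r => exists K G, Fam K /\ (forall x, K x <-> ball_inter d G x) /\ G c r).
  intros x. split.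
  - intros Hx c r [K [G [FK [HG Gc]]]]. exact (proj1 (HG x) (Hx K FK) c r Gc).
  - intros Hx2 K FK. destruct (Hadm K FK) as [G HG]. apply HG.
    intros c r Gc. apply Hx2. exists K, G. auto.
Qed.

Lemma chain_min (S : (M -> Prop) -> Prop) (K1 : M -> Prop) :
  S K1 ->
  (forall K2 K3, S K2 -> S K3 -> (forall x, K2 x -> K3 x) \/ (forall x, K3 x -> K2 x)) ->
  forall l, (forall K, In K l -> S K) ->
  exists K0, S K0 /\ forall K, In K l -> forall x, K0 x -> K x.
Proof.
  intros S1 Htot l. induction l as [|a l IH]; intros Hl.
  - exists K1. split; auto. intros K [].
  - destruct IH as [K0 [SK0 H0]].
    { intros K HK. apply Hl. right; auto. }
    assert (Sa : S a) by (apply Hl; left; auto).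
    destruct (Htot K0 a SK0 Sa) as [h|h].
    + exists K0. split; auto. intros K [<-|HK] x Hx; [exact (h x Hx)|exact (H0 K HK x Hx)].
    + exists a. split; auto. intros K [<-|HK] x ax; [exact ax|exact (H0 K HK x (h x ax))].
Qed.

End Aux.

Lemma orbit_fix {M} (T : M -> M) c w : T c = c -> orbit T c w -> w = c.
Proof.
  intros Hc [->|[n ->]]; auto. induction n; simpl; auto. rewrite IHn; auto.
Qed.

Lemma orbit_in {M} (T : M -> M) (K : M -> Prop) y w :
  (forall x, K x -> K (T x)) -> K y -> orbit T y w -> K w.
Proof.
  intros HK Ky [->|[n ->]]; auto. induction n; simpl; auto.
Qed.

Lemma fixed_in (M : Type) (d : M -> M -> R) (T : M -> M) :
  is_metric d -> bounded_metric d -> metric_normal_structure d ->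
  admissible_compact d -> orbit_nonexpansive d T ->
  forall A : M -> Prop, (exists x, A x) -> admissible d A -> (forall x, A x -> A (T x)) ->
  exists x, A x /\ T x = x.
Proof.
  intros [d0 [dz [dsym dtri]]] [B HB] Hns Hcomp Hne A Ane Aadm Ainv.
  set (Q := fun K : M -> Prop => (exists x, K x) /\ admissible d K /\
             (forall x, K x -> K (T x)) /\ (forall x, K x -> A x)).
  destruct (minimal_exists M A Q) as [K [[[x0 Kx0] [Kadm [Kinv KA]]] Kmin]].
  - intros K K' HKK' [[x Kx] [[F HF] [Hi Hs]]]. split; [|split; [|split]].
    + exists x; apply HKK'; auto.
    + exists F. intros x'. rewrite <- HKK'. apply HF.
    + intros x' Hx'. apply HKK', Hi, HKK', Hx'.
    + intros x' Hx'. apply Hs, HKK', Hx'.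
  - intros Fam HQ Htot.
    assert (HQs : forall K, Fam K -> forall x, K x -> A x)
      by (intros K FK; destruct (HQ K FK) as [_ [_ [_ h]]]; exact h).
    assert (HQa : forall K, Fam K -> admissible d K)
      by (intros K FK; destruct (HQ K FK) as [_ [h _]]; exact h).
    assert (HQn : forall K, Fam K -> exists x, K x)
      by (intros K FK; destruct (HQ K FK) as [h _]; exact h).
    assert (HQi : forall K, Fam K -> forall x, K x -> K (T x))
      by (intros K FK; destruct (HQ K FK) as [_ [_ [h _]]]; exact h).
    set (Fam' := fun K => K = A \/ Fam K).
    assert (Htot' : forall K2 K3, Fam' K2 -> Fam' K3 ->
              (forall x, K2 x -> K3 x) \/ (forall x, K3 x -> K2 x)).
    { intros K2 K3 [->|F2] [->|F3].
      - left; intros x h; exact h.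
      - right. exact (HQs _ F3).
      - left. exact (HQs _ F2).
      - exact (Htot _ _ F2 F3). }
    assert (Hadm' : forall K, Fam' K -> admissible d K).
    { intros K [->|FK]; [exact Aadm|exact (HQa _ FK)]. }
    assert (Hequiv : forall x, (forall K, Fam' K -> K x) <-> (A x /\ forall K, Fam K -> K x)).
    { intros x. split.
      - intros H. split; [apply H; left; reflexivity|]. intros K FK. apply H. right; exact FK.
      - intros [Ax H] K [->|FK]; [exact Ax|exact (H K FK)]. }
    split; [|split; [|split]].
    + destruct (Hcomp Fam' Hadm') as [x Hx].
      * intros l Hl. destruct (chain_min Fam' A (or_introl eq_refl) Htot' l Hl) as [K0 [[->|FK0] H0]].
        -- destruct Ane as [a Aa]. exists a. intros K HK. exact (H0 K HK a Aa).
        -- destruct (HQn _ FK0) as [a Ka]. exists a. intros K HK. exact (H0 K HK a Ka).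
      * exists x. exact (proj1 (Hequiv x) Hx).
    + destruct (adm_inter d Fam' Hadm') as [F HF]. exists F. intros x.
      rewrite <- Hequiv. apply HF.
    + intros x [Ax Hx]. split; [exact (Ainv x Ax)|]. intros K FK. exact (HQi _ FK x (Hx K FK)).
    + intros x [Ax _]; exact Ax.
  -
    assert (Kmin' : forall K', (exists x, K' x) -> admissible d K' ->
              (forall x, K' x -> K' (T x)) -> (forall x, K' x -> K x) -> forall x, K x -> K' x).
    { intros K' a b c e. apply Kmin; auto. split; [|split; [|split]]; auto. }
    assert (Dmono : forall x y, K y -> Dist d x (orbit T y) <= Dist d x K).
    { intros x y Ky. apply Dist_le.
      - exists y; left; auto.
      - intros a Ha. apply (Dist_ub d B); auto. apply (orbit_in T K y); auto. }
    assert (step1 : forall x y, K x -> K y -> d (T x) y <= Dist d x K).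
    { intros x y Kx Ky.
      assert (H := Kmin' (fun w => K w /\ forall c r, (c = T x /\ r = Dist d x K) -> d w c <= r)).
      destruct H with (x := y) as [_ Hy]; auto.
      - exists (T x0). split; auto. intros c r [-> ->]. rewrite dsym.
        eapply Rle_trans; [apply Hne|]. apply Dmono; auto.
      - apply adm_and; auto.
      - intros z [Kz _]. split; auto. intros c r [-> ->]. rewrite dsym.
        eapply Rle_trans; [apply Hne|]. apply Dmono; auto.
      - intros z [Kz _]; auto.
      - rewrite dsym. apply Hy. auto. }
    assert (single : forall x y, K x -> K y -> x = y).
    { intros x y Kx Ky. apply NNPP. intros Hxy.
      destruct (Hns K Kadm) as [z [Kz Hz]].
      { exists x, y. auto. }
      assert (H := Kmin' (fun w => K w /\ forall c r, (K c /\ r = Dist d z K) -> d w c <= r)).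
      assert (Hall : forall w, K w -> forall c, K c -> d w c <= Dist d z K).
      { intros w Kw c Kc. destruct H with (x := w) as [_ Hw]; auto.
        - exists z. split; auto. intros c' r [Kc' ->]. apply (Dist_ub d B); auto.
        - apply adm_and; auto.
        - intros u [Ku Hu]. split; auto. intros c' r [Kc' ->].
          eapply Rle_trans; [apply step1; auto|]. apply Dist_le.
          + exists x0; auto.
          + intros a Ka. apply Hu. auto.
        - intros u [Ku _]; auto. }
      assert (diam d K <= Dist d z K).
      { apply diam_le; [exists x0; auto|]. auto. }
      lra. }
    exists x0. split; [exact (KA x0 Kx0)|apply single; [apply Kinv|]; exact Kx0].
Qed.

Theorem corollary3p6 (M : Type) (d : M -> M -> R) (T : M -> M) :
  inhabited M ->
  is_metric d ->
  bounded_metric d ->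
  metric_normal_structure d ->
  admissible_compact d ->
  orbit_nonexpansive d T ->
  (exists x, Fix T x) /\ one_local_retract d (Fix T).
Proof.
  intros [m] Hm Hb Hns Hc Hne. split.
  - destruct (fixed_in M d T Hm Hb Hns Hc Hne (fun _ => True)) as [x [_ Hx]].
    + exists m; auto.
    + exists (fun _ _ => False). intros x. split; [intros _ c r []|auto].
    + auto.
    + exists x. exact Hx.
  - intros F HF Hi.
    destruct (fixed_in M d T Hm Hb Hns Hc Hne (ball_inter d F)) as [x [Ix Hx]]; auto.
    + exists F. intros x; tauto.
    + intros x Ix c r Fc. unfold cball. rewrite <- (HF c r Fc).
      eapply Rle_trans; [apply Hne|]. apply Dist_le.
      * exists c; left; auto.
      * intros a Ha. rewrite (orbit_fix T c a (HF c r Fc) Ha). apply Ix; auto.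
    + exists x. split; auto.
Qed.
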